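(* Let $\Gamma$ be a groupoid over a set $X$ and let $K:\Gamma\times\Gamma\to\mathbb{C}$ be a positive definite kernel such that $K(\gamma,\chi)=0$ whenever $r(\gamma)\neq r(\chi)$ and $K(\chi,\gamma)=K(\gamma^{-1}\chi,\varepsilon(r(\gamma^{-1}\chi)))$ whenever $r(\gamma)=r(\chi)$. For $x\in X$ let $K^x$ be the restriction of $K$ to $\Gamma^x\times\Gamma^x$ and $H(K^x)$ its reproducing kernel Hilbert space, with $K_\chi:=K^{r(\chi)}(\cdot,\chi)$. Then for each $\gamma\in\Gamma$ there is a unique unitary operator $\mathcal{U}(\gamma):H(K^{s(\gamma)})\to H(K^{r(\gamma)})$ with $\mathcal{U}(\gamma)K_\chi=K_{\gamma\chi}$ for all $\chi\in\Gamma^{s(\gamma)}$; $(\mathcal{U},\{H(K^x)\}_{x\in X})$ is a unitary representation of $\Gamma$; and with the vector field $v(x):=K_{\varepsilon(x)}\in H(K^x)$ one has, for all $\gamma,\chi\in\Gamma$ with $r(\gamma)=r(\chi)$, $K(\chi,\gamma)=\langle\mathcal{U}(\gamma)v(s(\gamma)),\mathcal{U}(\chi)v(s(\chi))\rangle_{H(K^{r(\gamma)})}$.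
   Context: A groupoid over $X$ consists of sets $\Gamma,X$, surjective maps $s,r:\Gamma\to X$, an associative multiplication $\gamma_1\gamma_2$ defined when $r(\gamma_2)=s(\gamma_1)$ (with $s(\gamma_1\gamma_2)=s(\gamma_2)$, $r(\gamma_1\gamma_2)=r(\gamma_1)$), an embedding $\varepsilon:X\to\Gamma$ with $\varepsilon(r(\gamma))\gamma=\gamma=\gamma\varepsilon(s(\gamma))$, and an inversion with $\gamma^{-1}\gamma=\varepsilon(s(\gamma))$, $\gamma\gamma^{-1}=\varepsilon(r(\gamma))$. $\Gamma^x:=r^{-1}(x)$. A unitary representation $(\mathcal{U},\{H_x\}_{x\in X})$ of $\Gamma$ consists of Hilbert spaces $H_x$ and unitaries $\mathcal{U}(\gamma):H_{s(\gamma)}\to H_{r(\gamma)}$ with $\mathcal{U}(\gamma_1\gamma_2)=\mathcal{U}(\gamma_1)\mathcal{U}(\gamma_2)$ whenever defined. Inner products are antilinear in the second argument. A kernel $K$ on a set $A$ is positive definite if $\sum_{k,l}\lambda_kK(a_k,a_l)\bar\lambda_l\ge0$ for all finite choices of $a_k\in A$, $\lambda_k\in\mathbb{C}$; its reproducing kernel Hilbert space $H(K)$ is the unique Hilbert space of functions on $A$ containing all $K(\cdot,a)$ with $f(a)=\langle f,K(\cdot,a)\rangle$ for all $f$, equal to the completion of $\mathrm{span}\{K(\cdot,a)\}_{a\in A}$, so that $K(b,a)=\langle K(\cdot,a),K(\cdot,b)\rangle$. *)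

(* Defs.v *)
From mathcomp Require Import all_boot all_order all_algebra.
From mathcomp Require Import reals complex.
Set Implicit Arguments. Unset Strict Implicit. Unset Printing Implicit Defensive.
Import Order.TTheory GRing.Theory Num.Theory.
Local Open Scope ring_scope.

(* Multiplication is a total function; its value is only constrained
   (and only ever used) when it is defined, i.e. r g2 = s g1. *)
Record groupoid := Groupoid {
  gel : Type;
  gob : Type;
  gs : gel -> gob;
  gr : gel -> gob;
  gmul : gel -> gel -> gel;
  geps : gob -> gel;
  ginv : gel -> gel;
  gs_surj : forall x, exists g, gs g = x;
  gr_surj : forall x, exists g, gr g = x;
  gs_mul : forall g1 g2, gr g2 = gs g1 -> gs (gmul g1 g2) = gs g2;
  gr_mul : forall g1 g2, gr g2 = gs g1 -> gr (gmul g1 g2) = gr g1;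
  gmulA : forall g1 g2 g3, gr g2 = gs g1 -> gr g3 = gs g2 ->
            gmul g1 (gmul g2 g3) = gmul (gmul g1 g2) g3;
  geps_inj : forall x y, geps x = geps y -> x = y;
  gs_eps : forall x, gs (geps x) = x;
  gr_eps : forall x, gr (geps x) = x;
  geps_mull : forall g, gmul (geps (gr g)) g = g;
  geps_mulr : forall g, gmul g (geps (gs g)) = g;
  gs_inv : forall g, gs (ginv g) = gr g;
  gr_inv : forall g, gr (ginv g) = gs g;
  gmulVg : forall g, gmul (ginv g) g = geps (gs g);
  gmulgV : forall g, gmul g (ginv g) = geps (gr g)
}.

Definition fiber (G : groupoid) (x : gob G) := { g : gel G | gr g = x }.

Definition fmul (G : groupoid) (g : gel G) (c : fiber (gs g)) : fiber (gr g) :=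
  exist _ (gmul g (proj1_sig c))
        (@gr_mul G g (proj1_sig c) (proj2_sig c)).

Definition feps (G : groupoid) (x : gob G) : fiber x := exist _ (geps x) (gr_eps x).

Definition ftr (G : groupoid) (C : Type) (x y : gob G) (e : x = y)
  (f : fiber x -> C) : fiber y -> C := eq_rect x (fun z => fiber z -> C) f y e.

Lemma gs_mul_sym (G : groupoid) (g1 g2 : gel G) (h : gr g2 = gs g1) :
  gs g2 = gs (gmul g1 g2).
Proof. by rewrite gs_mul. Qed.

Lemma gr_mul_sym (G : groupoid) (g1 g2 : gel G) (h : gr g2 = gs g1) :
  gr g1 = gr (gmul g1 g2).
Proof. by rewrite gr_mul. Qed.

Section Hilbert.
Variable R : realType.
Local Notation C := R[i].
Variable A : Type.

Definition fzero : A -> C := fun _ => 0.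
Definition fadd (f g : A -> C) : A -> C := fun a => f a + g a.
Definition fscale (c : C) (f : A -> C) : A -> C := fun a => c * f a.
Definition fsub (f g : A -> C) : A -> C := fun a => f a - g a.

Definition pos_def_kernel (K : A -> A -> C) : Prop :=
  forall (n : nat) (a : 'I_n -> A) (lam : 'I_n -> C),
    0 <= \sum_(k < n) \sum_(l < n) lam k * K (a k) (a l) * (lam l)^*.

Definition hilbert_space (H : (A -> C) -> Prop) (ip : (A -> C) -> (A -> C) -> C)
  : Prop :=
  [/\ H fzero,
      (forall f g, H f -> H g -> H (fadd f g)) &
      (forall c f, H f -> H (fscale c f))] /\
  [/\ (forall c f g h, H f -> H g -> H h ->
          ip (fadd (fscale c f) g) h = c * ip f h + ip g h),
      (forall f g, H f -> H g -> ip f g = (ip g f)^*),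
      (forall f, H f -> 0 <= ip f f) &
      (forall f, H f -> ip f f = 0 -> f = fzero)] /\
  (forall u : nat -> A -> C, (forall n, H (u n)) ->
     (forall e : C, 0 < e -> exists N, forall m n, (N <= m)%N -> (N <= n)%N ->
          ip (fsub (u m) (u n)) (fsub (u m) (u n)) < e) ->
     exists f, H f /\
       (forall e : C, 0 < e -> exists N, forall n, (N <= n)%N ->
          ip (fsub (u n) f) (fsub (u n) f) < e)).

(* (H, ip) is the reproducing kernel Hilbert space H(K) of K : a Hilbert
   space of functions on A containing every K(.,a) with f a = <f, K(.,a)>.
   (Such a space is unique, so this characterizes H(K).) *)
Definition is_rkhs (K : A -> A -> C) (H : (A -> C) -> Prop)
  (ip : (A -> C) -> (A -> C) -> C) : Prop :=
  [/\ hilbert_space H ip,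
      (forall a, H (fun b => K b a)) &
      (forall f a, H f -> f a = ip f (fun b => K b a))].

End Hilbert.

Definition unitary (R : realType) (A B : Type)
  (H1 : (A -> R[i]) -> Prop) (ip1 : (A -> R[i]) -> (A -> R[i]) -> R[i])
  (H2 : (B -> R[i]) -> Prop) (ip2 : (B -> R[i]) -> (B -> R[i]) -> R[i])
  (T : (A -> R[i]) -> (B -> R[i])) : Prop :=
  [/\ (forall f, H1 f -> H2 (T f)),
      (forall c f g, H1 f -> H1 g -> T (fadd (fscale c f) g) = fadd (fscale c (T f)) (T g)),
      (forall f g, H1 f -> H1 g -> ip2 (T f) (T g) = ip1 f g) &
      (forall h, H2 h -> exists2 f, H1 f & T f = h)].

Definition Kres (R : realType) (G : groupoid) (K : gel G -> gel G -> R[i])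
  (x : gob G) : fiber x -> fiber x -> R[i] :=
  fun a b => K (proj1_sig a) (proj1_sig b).

Definition Kvec (R : realType) (G : groupoid) (K : gel G -> gel G -> R[i])
  (x : gob G) (c : fiber x) : fiber x -> R[i] := fun a => Kres K a c.
Arguments Kres {R G} K x _ _.

(* Main.v *)
Require Import Defs.
From mathcomp Require Import all_boot all_order all_algebra.
From mathcomp Require Import reals complex.
From mathcomp Require Import boolp classical_sets.
From mathcomp Require Import ring lra.
Import Order.TTheory GRing.Theory Num.Theory.
Local Open Scope ring_scope.

Set Implicit Arguments. Unset Strict Implicit. Unset Printing Implicit Defensive.

Section HS.
Variable R : realType.
Local Notation C := R[i].
Local Notation toC x := (real_complex R x).
Variable A : Type.
Variable H : (A -> C) -> Prop.
Variable ip : (A -> C) -> (A -> C) -> C.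
Hypothesis hH : hilbert_space H ip.
Local Notation f0 := (@fzero R A).

Lemma H0 : H (@fzero R A). Proof. by case: hH => -[]. Qed.
Lemma HD f g : H f -> H g -> H (fadd f g). Proof. by case: hH => -[] _ h _ _; apply: h. Qed.
Lemma HZ c f : H f -> H (fscale c f). Proof. by case: hH => -[] _ _ h _; apply: h. Qed.
Lemma HB f g : H f -> H g -> H (fsub f g).
Proof.
move=> hf hg; have -> : fsub f g = fadd f (fscale (-1) g).
  by apply: funext => a; rewrite /fsub /fadd /fscale mulN1r.
by apply: HD => //; apply: HZ.
Qed.

Lemma ipAx c f g h : H f -> H g -> H h ->
  ip (fadd (fscale c f) g) h = c * ip f h + ip g h.
Proof. by case: hH => _ [] [] h1 _ _ _ _; apply: h1. Qed.
Lemma ipC f g : H f -> H g -> ip f g = (ip g f)^*.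
Proof. by case: hH => _ [] [] _ h1 _ _ _; apply: h1. Qed.
Lemma ip_ge0 f : H f -> 0 <= ip f f.
Proof. by case: hH => _ [] [] _ _ h1 _ _; apply: h1. Qed.
Lemma ip_eq0 f : H f -> ip f f = 0 -> f = f0.
Proof. by case: hH => _ [] [] _ _ _ h1 _; apply: h1. Qed.

Lemma ip0l h : H h -> ip f0 h = 0.
Proof.
move=> hh; have := ipAx 1 H0 H0 hh.
have -> : fadd (fscale 1 f0) f0 = f0.
  by apply: funext => a; rewrite /fadd /fscale /fzero mulr0 addr0.
rewrite mul1r => e.
by apply: (@addrI _ (ip f0 h)); rewrite addr0 -e.
Qed.
Lemma ipZl c f h : H f -> H h -> ip (fscale c f) h = c * ip f h.
Proof.
move=> hf hh; have := ipAx c hf H0 hh; rewrite ip0l // addr0 => <-.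
by congr ip; apply: funext => a; rewrite /fadd /fscale /fzero addr0.
Qed.
Lemma ipDl f g h : H f -> H g -> H h -> ip (fadd f g) h = ip f h + ip g h.
Proof.
move=> hf hg hh; have := ipAx 1 hf hg hh; rewrite mul1r => <-.
by congr ip; apply: funext => a; rewrite /fadd /fscale mul1r.
Qed.
Lemma ipZr c f h : H f -> H h -> ip h (fscale c f) = c^* * ip h f.
Proof.
move=> hf hh; rewrite ipC //; last exact: HZ.
by rewrite ipZl // rmorphM /= -ipC.
Qed.
Lemma ipDr f g h : H f -> H g -> H h -> ip h (fadd f g) = ip h f + ip h g.
Proof.
move=> hf hg hh; rewrite ipC //; last exact: HD.
by rewrite ipDl // rmorphD /= -!ipC.
Qed.
Lemma fsubE (f g : A -> C) : fsub f g = fadd f (fscale (-1) g).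
Proof. by apply: funext => a; rewrite /fsub /fadd /fscale mulN1r. Qed.
Lemma ipBl f g h : H f -> H g -> H h -> ip (fsub f g) h = ip f h - ip g h.
Proof.
by move=> hf hg hh; rewrite fsubE ipDl ?ipZl ?mulN1r //; apply: HZ.
Qed.
Lemma ipBr f g h : H f -> H g -> H h -> ip h (fsub f g) = ip h f - ip h g.
Proof.
by move=> hf hg hh; rewrite fsubE ipDr ?ipZr ?rmorphN1 ?mulN1r //; apply: HZ.
Qed.

Definition nr (h : A -> C) : R := complex.Re (ip h h).
Definition sq (z : C) : R := complex.Re (z * z^*).

Lemma realC_Re (z : C) : 0 <= z -> z = toC (complex.Re z).
Proof. by move=> /ger0_real /complex_realP [k ->]. Qed.
Lemma nrE h : H h -> ip h h = toC (nr h).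
Proof. by move=> hh; apply: realC_Re; apply: ip_ge0. Qed.
Lemma sqE z : z * z^* = toC (sq z).
Proof. by apply: realC_Re; apply: mul_conjC_ge0. Qed.
Lemma nr_ge0 h : H h -> 0 <= nr h.
Proof. by move=> hh; rewrite -ler0c -nrE //; apply: ip_ge0. Qed.
Lemma sq_ge0 z : 0 <= sq z.
Proof. by rewrite -ler0c -sqE; apply: mul_conjC_ge0. Qed.
Lemma conj_toC (x : R) : (toC x)^* = toC x.
Proof. by rewrite conj_Creal // complex_real. Qed.


Lemma ip_expand u v t : H u -> H v ->
  ip (fsub u (fscale t v)) (fsub u (fscale t v)) =
  ip u u - t^* * ip u v - t * ip v u + t * t^* * ip v v.
Proof.
move=> hu hv; have hw := HZ t hv; have huw := HB hu hw.
rewrite ipBl // !ipBr // !ipZl // !ipZr //; ring.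
Qed.

Lemma cs_core u v : H u -> H v ->
  sq (ip u v) <= (nr v + 1) *
     (nr u - nr (fsub u (fscale (toC ((nr v + 1)^-1) * ip u v) v))).
Proof.
move=> hu hv; set z := ip u v; set s := (nr v + 1)^-1.
have E : nr (fsub u (fscale (toC s * z) v)) =
    nr u - 2 * s * sq z + s * s * sq z * nr v.
  have hw : H (fsub u (fscale (toC s * z) v)) by apply: HB => //; apply: HZ.
  apply: complexI; rewrite -(nrE hw) ip_expand //.
  rewrite !(rmorphD, rmorphN, rmorphM, rmorph_nat) /= -sqE -!nrE //.
  rewrite conj_toC -/z (ipC hv hu) -/z; ring.
rewrite E.
have hV := nr_ge0 hv; have hq := sq_ge0 z.
have hs : s * (nr v + 1) = 1 by rewrite mulVf // gt_eqF // ltr_wpDl.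
have hs0 : 0 <= s by rewrite invr_ge0; lra.
have e1 : s * nr v = 1 - s by rewrite -hs; ring.
rewrite (_ : _ * _ = 2 * sq z * (s * (nr v + 1)) - sq z * (s * nr v) * (s * (nr v + 1))); last by ring.
rewrite hs e1; have := mulr_ge0 hq hs0; lra.
Qed.

Lemma cs_weak u v : H u -> H v -> sq (ip u v) <= (nr v + 1) * nr u.
Proof.
move=> hu hv; apply: (le_trans (cs_core hu hv)).
have hV := nr_ge0 hv; rewrite ler_wpM2l //; first lra.
rewrite lerBlDr lerDl nr_ge0 //; apply: HB => //; exact: HZ.
Qed.

Lemma nr_scale c w : H w -> nr (fscale c w) = sq c * nr w.
Proof.
move=> hw; have hcw := HZ c hw; apply: complexI; rewrite -(nrE hcw) ipZl // ipZr //.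
by rewrite rmorphM /= -sqE -nrE //; ring.
Qed.

Lemma parallelogram a b : H a -> H b ->
  nr (fsub a b) + nr (fadd a b) = 2 * nr a + 2 * nr b.
Proof.
move=> ha hb; have hs := HB ha hb; have hd := HD ha hb.
apply: complexI; rewrite !(rmorphD, rmorphM, rmorph_nat) /= -!nrE //.
rewrite ipBl // !ipBr // ipDl // !ipDr //; ring.
Qed.

Lemma nr_subC a b : H a -> H b -> nr (fsub a b) = nr (fsub b a).
Proof.
move=> ha hb; have -> : fsub b a = fscale (-1) (fsub a b).
  by apply: funext => x; rewrite /fsub /fscale; ring.
rewrite nr_scale; last exact: HB. rewrite (_ : sq (-1) = 1) ?mul1r //.
by apply: complexI; rewrite -sqE rmorphN1 rmorph1; ring.
Qed.

End HS.

Section CC.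
Variable R : realType.
Local Notation C := R[i].
Local Notation toC x := (real_complex R x).

Lemma sq_conj (z : C) : sq z^* = sq z.
Proof. by apply: complexI; rewrite -!sqE conjCK mulrC. Qed.

Lemma sqD (x y : C) : sq (x + y) <= 2 * sq x + 2 * sq y.
Proof.
have e : sq (x + y) + sq (x - y) = 2 * sq x + 2 * sq y.
  apply: complexI; rewrite !(rmorphD, rmorphM, rmorph_nat) /= -!sqE.
  rewrite !rmorphD rmorphN /=; ring.
have := sq_ge0 (x - y); lra.
Qed.

Lemma sqN (x : C) : sq (- x) = sq x.
Proof. by apply: complexI; rewrite -!sqE rmorphN /=; ring. Qed.

Lemma sq_eq0 (x : C) : sq x = 0 -> x = 0.
Proof.
move=> h; have : x * x^* = 0 by rewrite sqE h.
by move/eqP; rewrite mulf_eq0 conjC_eq0 orbb => /eqP.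
Qed.

Lemma small_sq (x : C) : (forall e : R, 0 < e -> sq x < e) -> x = 0.
Proof.
move=> h; apply: sq_eq0; have := sq_ge0 x; rewrite le_eqVlt => /orP [/eqP -> //|].
by move=> hp; have := h _ hp; rewrite ltxx.
Qed.

Lemma posC (e : C) : 0 < e -> exists2 e0 : R, 0 < e0 & e = toC e0.
Proof.
move=> he; have := ltW he => /realC_Re ->; exists (complex.Re e) => //.
by rewrite -ltcR -realC_Re // ltW.
Qed.

Lemma archi_inv (e0 : R) : 0 < e0 -> exists N, forall n, (N <= n)%N -> n.+1%:R^-1 < e0.
Proof.
move=> he; exists (Num.Def.archi_bound (e0^-1)) => n hn.
have hi : 0 < e0^-1 by rewrite invr_gt0.
have h1 := archi_boundP (ltW hi).
have h2 : (Num.Def.archi_bound e0^-1)%:R <= n%:R :> R by rewrite ler_nat.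
have h3 : n%:R < n.+1%:R :> R by rewrite ltr_nat.
rewrite -(invrK e0) ltf_pV2 ?posrE ?invr_gt0 ?ltr0n //.
lra.
Qed.
End CC.

Section HS2.
Variable R : realType.
Local Notation C := R[i].
Local Notation toC x := (real_complex R x).
Variable A : Type.
Variable H : (A -> C) -> Prop.
Variable ip : (A -> C) -> (A -> C) -> C.
Hypothesis hH : hilbert_space H ip.

Lemma complete_R u : (forall n, H (u n)) ->
  (forall n k, nr ip (fsub (u n) (u k)) <= 2 * n.+1%:R^-1 + 2 * k.+1%:R^-1) ->
  exists p, H p /\ forall e : R, 0 < e -> exists N, forall n, (N <= n)%N ->
     nr ip (fsub (u n) p) < e.
Proof.
move=> hu hc; case: hH => _ [] _ hcomp.
have [] := hcomp u hu.
  move=> e he; have [e0 he0 ->] := posC he.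
  have he4 : 0 < e0 / 4 by rewrite divr_gt0.
  have [N hN] := archi_inv he4; exists N => m n hm hn.
  rewrite (nrE hH); last by apply: (HB hH); apply: hu.
  rewrite ltcR; have := hc m n; have := hN _ hm; have := hN _ hn.
  have : e0 / 4 * 4 = e0 by rewrite divfK // pnatr_eq0.
  set q := e0 / 4; set a := n.+1%:R^-1; set b := m.+1%:R^-1; lra.
move=> p [hp hconv]; exists p; split => // e he.
have [] := hconv (toC e); first by rewrite ltcR.
move=> N hN; exists N => n hn; have := hN _ hn.
by rewrite (nrE hH) ?ltcR //; apply: (HB hH).
Qed.

End HS2.

Section UNIQ.
Variable R : realType.
Local Notation C := R[i].
Local Notation toC x := (real_complex R x).
Variable A : Type.
Variable K : A -> A -> C.
Variables (H1 H2 : (A -> C) -> Prop) (ip1 ip2 : (A -> C) -> (A -> C) -> C).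
Hypotheses (r1 : is_rkhs K H1 ip1) (r2 : is_rkhs K H2 ip2).
Local Notation f0 := (@fzero R A).
Local Notation Kv a := (fun b => K b a).

Let hs1 : hilbert_space H1 ip1. Proof. by case: r1. Qed.
Let hs2 : hilbert_space H2 ip2. Proof. by case: r2. Qed.
Let HK1 a : H1 (Kv a). Proof. by case: r1. Qed.
Let HK2 a : H2 (Kv a). Proof. by case: r2. Qed.
Let rep1 f a : H1 f -> f a = ip1 f (Kv a). Proof. by case: r1 => _ _; apply. Qed.
Let rep2 f a : H2 f -> f a = ip2 f (Kv a). Proof. by case: r2 => _ _; apply. Qed.

Definition MM m := [/\ H1 m, H2 m & forall h, H1 h -> H2 h -> ip1 h m = ip2 h m].

Lemma MM_K a : MM (Kv a).
Proof. by split => // h h1 h2; rewrite -rep1 // -rep2. Qed.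

Lemma MM_0 : MM f0.
Proof.
split; [exact: H0 hs1 | exact: H0 hs2 |].
move=> h h1 h2; have z1 := H0 hs1; have z2 := H0 hs2.
by rewrite (ipC hs1 h1 z1) (ipC hs2 h2 z2) (ip0l hs1) // (ip0l hs2).
Qed.

Lemma MM_lin c u v : MM u -> MM v -> MM (fadd (fscale c u) v).
Proof.
move=> [u1 u2 hu] [v1 v2 hv].
have w1 := HZ hs1 c u1; have w2 := HZ hs2 c u2.
split; [exact: (HD hs1 w1 v1) | exact: (HD hs2 w2 v2) |].
move=> h h1 h2; rewrite (ipDr hs1) // (ipDr hs2) // (ipZr hs1) // (ipZr hs2) //.
by rewrite hu ?hv.
Qed.

Lemma MM_scale c u : MM u -> MM (fscale c u).
Proof.
move=> hu; have -> : fscale c u = fadd (fscale c u) f0.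
  by apply: funext => x; rewrite /fadd /fzero addr0.
by apply: MM_lin => //; apply: MM_0.
Qed.

Lemma MM_sub u v : MM u -> MM v -> MM (fsub u v).
Proof.
move=> hu hv; have -> : fsub u v = fadd (fscale (-1) v) u.
  by apply: funext => x; rewrite /fsub /fadd /fscale; ring.
exact: MM_lin.
Qed.

Lemma MM_nr m : MM m -> nr ip1 m = nr ip2 m.
Proof. by case=> m1 m2 hm; rewrite /nr hm. Qed.

Lemma approx f : H1 f -> H2 f /\
  (forall e : R, 0 < e -> exists m, [/\ MM m, nr ip1 (fsub m f) < e & nr ip2 (fsub m f) < e]).
Proof.
move=> hf.
pose S := (fun x : R => exists m, MM m /\ x = nr ip1 (fsub f m)).
have Sne : nonempty S by exists (nr ip1 (fsub f f0)), f0; split => //; exact: MM_0.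
have Slb : has_lbound S.
  exists 0 => y [m [[hm _ _] ->]]; apply: (nr_ge0 hs1); exact: (HB hs1).
have hinf : has_inf S by split.
pose d := inf S.
have dle m : MM m -> d <= nr ip1 (fsub f m).
  by move=> hm; apply: (ge_inf Slb); exists m.
have : forall n : nat, exists m, MM m /\ nr ip1 (fsub f m) < d + n.+1%:R^-1.
  move=> n; have hp : 0 < n.+1%:R^-1 :> R by rewrite invr_gt0 ltr0n.
  by have [x [m [hm ->]] hx] := inf_adherent hp hinf; exists m.
case/choice => ms hms.
have msM n : MM (ms n) by case: (hms n).
have ms1 n : H1 (ms n) by case: (msM n).
have ms2 n : H2 (ms n) by case: (msM n).
have hC n k : nr ip1 (fsub (ms n) (ms k)) <= 2 * n.+1%:R^-1 + 2 * k.+1%:R^-1.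
  pose a := fsub f (ms k); pose b := fsub f (ms n).
  have ha : H1 a by apply: (HB hs1).
  have hb : H1 b by apply: (HB hs1).
  pose mid := fadd (fscale 2^-1 (ms n)) (fscale 2^-1 (ms k)).
  have hmid : MM mid by apply: MM_lin => //; apply: MM_scale.
  have e1 : fsub a b = fsub (ms n) (ms k).
    by apply: funext => x; rewrite /a /b /fsub; ring.
  have e2 : fadd a b = fscale 2 (fsub f mid).
    apply: funext => x; rewrite /a /b /mid /fsub /fadd /fscale.
    have h2 : (2 : C) * 2^-1 = 1 by rewrite mulfV // pnatr_eq0.
    rewrite mulrBr mulrDr !mulrA h2 !mul1r; ring.
  have hfm : H1 (fsub f mid) by apply: (HB hs1) => //; case: hmid.
  have := parallelogram hs1 ha hb; rewrite e1 e2 (nr_scale hs1) //.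
  have -> : sq (2 : C) = 4.
    by apply: complexI; rewrite -sqE conj_Creal ?realn // rmorph_nat; ring.
  have := dle _ hmid; have := hms n; have := hms k.
  move=> [_ hk] [_ hn]; rewrite -/a -/b in hk hn.
  move: hk hn; set p := n.+1%:R^-1; set q := k.+1%:R^-1; lra.
have [p [hp conv1]] := complete_R hs1 ms1 hC.
have hC2 n k : nr ip2 (fsub (ms n) (ms k)) <= 2 * n.+1%:R^-1 + 2 * k.+1%:R^-1.
  by rewrite -MM_nr; [apply: hC | apply: MM_sub].
have [g [hg conv2]] := complete_R hs2 ms2 hC2.
have pw1 a n : sq (ms n a - p a) <= (nr ip1 (Kv a) + 1) * nr ip1 (fsub (ms n) p).
  have hu : H1 (fsub (ms n) p) by apply: (HB hs1).
  have := cs_weak hs1 hu (HK1 a); rewrite -rep1 //.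
have pw2 a n : sq (ms n a - g a) <= (nr ip2 (Kv a) + 1) * nr ip2 (fsub (ms n) g).
  have hu : H2 (fsub (ms n) g) by apply: (HB hs2).
  have := cs_weak hs2 hu (HK2 a); rewrite -rep2 //.
have pw0 a n : sq (f a - ms n a) <= (nr ip1 (Kv a) + 1) * n.+1%:R^-1.
  have hu : H1 (fsub f (ms n)) by apply: (HB hs1).
  have := cs_core hs1 hu (HK1 a); rewrite -rep1 //.
  set t := (X in fscale X); move=> h; apply: (le_trans h).
  have hk := nr_ge0 hs1 (HK1 a).
  rewrite ler_wpM2l //; first lra.
  pose m' := fadd (fscale t (Kv a)) (ms n).
  have hm' : MM m' by apply: MM_lin => //; apply: MM_K.
  have -> : fsub (fsub f (ms n)) (fscale t (Kv a)) = fsub f m'.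
    by apply: funext => x; rewrite /m' /fsub /fadd /fscale; ring.
  have := dle _ hm'; have [_ hn] := hms n; move: hn; set q := n.+1%:R^-1; lra.
have lim_eq (q : A -> C) (Hq : (A -> C) -> Prop) (iq : (A -> C) -> (A -> C) -> C) :
    hilbert_space Hq iq -> (forall a, Hq (Kv a)) -> (forall n, Hq (ms n)) -> Hq q ->
    (forall a n, sq (ms n a - q a) <= (nr iq (Kv a) + 1) * nr iq (fsub (ms n) q)) ->
    (forall e : R, 0 < e -> exists N, forall n, (N <= n)%N -> nr iq (fsub (ms n) q) < e) ->
    f = q.
  move=> hsq hKq hmq hq pwq convq; apply: funext => a; apply/eqP; rewrite -subr_eq0; apply/eqP.
  apply: small_sq => e he.
  set k1 := nr ip1 (Kv a); set k2 := nr iq (Kv a).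
  have hk1 : 0 <= k1 by apply: (nr_ge0 hs1).
  have hk2 : 0 <= k2 by apply: (nr_ge0 hsq).
  pose e' := e / (4 * ((k1 + 1) + (k2 + 1))).
  have hc : 0 < 4 * ((k1 + 1) + (k2 + 1)) by apply: mulr_gt0 => //; lra.
  have he' : 0 < e' by rewrite divr_gt0.
  have ee : e' * (4 * ((k1 + 1) + (k2 + 1))) = e by rewrite divfK // gt_eqF.
  have [N1 hN1] := archi_inv he'; have [N2 hN2] := convq _ he'.
  pose n := maxn N1 N2.
  have h1 := hN1 n (leq_maxl _ _); have h2 := hN2 n (leq_maxr _ _).
  have := sqD (f a - ms n a) (ms n a - q a).
  have -> : f a - ms n a + (ms n a - q a) = f a - q a by ring.
  have := pw0 a n; have := pwq a n; rewrite -/k1 -/k2.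
  have h1' : (k1 + 1) * n.+1%:R^-1 < (k1 + 1) * e' by rewrite ltr_pM2l //; lra.
  have h2' : (k2 + 1) * nr iq (fsub (ms n) q) < (k2 + 1) * e' by rewrite ltr_pM2l //; lra.
  have := mulr_ge0 hk1 (ltW he'); have := mulr_ge0 hk2 (ltW he').
  move: ee h1' h2'; clearbody e'; set r := n.+1%:R^-1; set w := nr iq _.
  lra.
have ep : f = p := lim_eq p H1 ip1 hs1 HK1 ms1 hp pw1 conv1.
have eg : f = g := lim_eq g H2 ip2 hs2 HK2 ms2 hg pw2 conv2.
split; first by rewrite eg.
move=> e he; have [N1 hN1] := conv1 e he; have [N2 hN2] := conv2 e he.
exists (ms (maxn N1 N2)); split => //.
  by rewrite ep; apply: hN1; apply: leq_maxl.
by rewrite eg; apply: hN2; apply: leq_maxr.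
Qed.

Lemma ip_eq f f' : H1 f -> H1 f' -> ip1 f f' = ip2 f f'.
Proof.
move=> hf hf'; have [hf2 _] := approx hf; have [hf'2 ap] := approx hf'.
apply/eqP; rewrite -subr_eq0; apply/eqP; apply: small_sq => e he.
set n1 := nr ip1 f; set n2 := nr ip2 f.
have hn1 : 0 <= n1 by apply: (nr_ge0 hs1).
have hn2 : 0 <= n2 by apply: (nr_ge0 hs2).
pose c := 2 * (n1 + 1) + 2 * (n2 + 1).
have hc : 0 < c by rewrite /c; lra.
have he' : 0 < e / c by rewrite divr_gt0.
have ee : e / c * c = e by rewrite divfK // gt_eqF.
have [m [[m1 m2 hm] h1 h2]] := ap _ he'.
pose w := fsub m f'.
have w1 : H1 w by apply: (HB hs1).
have w2 : H2 w by apply: (HB hs2).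
have E : ip1 f f' - ip2 f f' = ip2 f w - ip1 f w.
  rewrite /w (ipBr hs1) // (ipBr hs2) // hm //; ring.
rewrite E.
have := sqD (ip2 f w) (- ip1 f w); rewrite sqN.
rewrite (ipC hs1 hf w1) (ipC hs2 hf2 w2) !sq_conj.
have := cs_weak hs1 w1 hf; have := cs_weak hs2 w2 hf2; rewrite -/n1 -/n2.
have h1' : (n1 + 1) * nr ip1 w < (n1 + 1) * (e / c) by rewrite ltr_pM2l //; lra.
have h2' : (n2 + 1) * nr ip2 w < (n2 + 1) * (e / c) by rewrite ltr_pM2l //; lra.
have := mulr_ge0 hn1 (ltW he'); have := mulr_ge0 hn2 (ltW he').
move: ee h1' h2'; rewrite /c; set q := e / _; set u1 := nr ip1 w; set u2 := nr ip2 w.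
clearbody q u1 u2; lra.
Qed.

End UNIQ.

Section TRANSPORT.
Variable R : realType.
Local Notation C := R[i].
Variables (A B : Type) (phi : B -> A) (psi : A -> B).
Hypotheses (phipsi : forall a, phi (psi a) = a) (psiphi : forall b, psi (phi b) = b).
Variables (K : A -> A -> C) (H : (A -> C) -> Prop) (ip : (A -> C) -> (A -> C) -> C).
Hypothesis rk : is_rkhs K H ip.

Definition Ht (h : B -> C) := H (fun a => h (psi a)).
Definition ipt (h h' : B -> C) := ip (fun a => h (psi a)) (fun a => h' (psi a)).

Lemma comp_phipsi (f : A -> C) : (fun a => f (phi (psi a))) = f.
Proof. by apply: funext => a; rewrite phipsi. Qed.

Lemma rkhs_transport : is_rkhs (fun b b' => K (phi b) (phi b')) Ht ipt.
Proof.
case: rk => hs hK hrep.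
have hs' : hilbert_space Ht ipt.
  split; [split|split].
  - exact: H0 hs.
  - by move=> f g hf hg; apply: (HD hs).
  - by move=> c f hf; apply: (HZ hs).
  - split.
    + by move=> c f g h hf hg hh; apply: (ipAx hs).
    + by move=> f g hf hg; apply: (ipC hs).
    + by move=> f hf; apply: (ip_ge0 hs).
    + move=> f hf /(ip_eq0 hs hf) e; apply: funext => b.
      by rewrite -(psiphi b); have := congr1 (fun F => F (phi b)) e.
  - move=> u hu hc; case: hs => _ [] _ hcomp.
    have [g [hg hconv]] := hcomp (fun n a => u n (psi a)) hu hc.
    exists (fun b => g (phi b)); split.
      by rewrite /Ht; change (H (fun a => g (phi (psi a)))); rewrite comp_phipsi.
    move=> e he; have [N hN] := hconv e he; exists N => n hn.
    have E : (fun a => fsub (u n) (fun b => g (phi b)) (psi a)) = fsub (fun a => u n (psi a)) g.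
      by apply: funext => a; rewrite /fsub phipsi.
    by rewrite /ipt E; apply: hN.
split => //.
  move=> b; rewrite /Ht; change (H (fun a => K (phi (psi a)) (phi b))).
  by rewrite (comp_phipsi (fun a => K a (phi b))).
move=> h b hh; rewrite /ipt.
change (h b = ip (fun a => h (psi a)) (fun a => K (phi (psi a)) (phi b))).
by rewrite (comp_phipsi (fun a => K a (phi b))) -hrep // psiphi.
Qed.
End TRANSPORT.

Section GR.
Variable G : groupoid.
Implicit Types g a b : gel G.

Lemma fib_eq (x : gob G) (a b : fiber x) : proj1_sig a = proj1_sig b -> a = b.
Proof.
case: a b => [a ha] [b hb] /= e; subst b; congr exist; exact: Prop_irrelevance.
Qed.

Lemma mulK g a : gr a = gr g -> gmul g (gmul (ginv g) a) = a.
Proof.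
move=> ha; rewrite gmulA ?gr_inv ?gs_inv // gmulgV -ha; exact: geps_mull.
Qed.

Lemma mulKV g b : gr b = gs g -> gmul (ginv g) (gmul g b) = b.
Proof.
move=> hb; rewrite gmulA ?gs_inv // gmulVg -hb; exact: geps_mull.
Qed.

Lemma inv_mul g1 g2 : gr g2 = gs g1 -> ginv (gmul g1 g2) = gmul (ginv g2) (ginv g1).
Proof.
move=> h; set k := gmul g1 g2; set w := gmul (ginv g2) (ginv g1).
have hw : gr w = gs g2.
  rewrite /w gr_mul; first exact: gr_inv.
  by rewrite gs_inv gr_inv.
have hkw : gmul k w = geps (gr k).
  rewrite /k -gmulA // ?hw // /w mulK ?gr_inv //.
  by rewrite gmulgV gr_mul.
rewrite -[LHS]geps_mulr gs_inv -hkw mulKV // gs_mul //.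
Qed.

Definition phiG g (a : fiber (gr g)) : fiber (gs g) :=
  exist _ (gmul (ginv g) (proj1_sig a))
    (etrans (gr_mul (etrans (proj2_sig a) (esym (gs_inv g)))) (gr_inv g)).

Lemma phiG_psiG g (b : fiber (gs g)) : phiG (fmul b) = b.
Proof. by apply: fib_eq; rewrite /= mulKV //; case: b. Qed.

Lemma psiG_phiG g (a : fiber (gr g)) : fmul (phiG a) = a.
Proof. by apply: fib_eq; rewrite /= mulK //; case: a. Qed.

Lemma ftrE (C : Type) (x y : gob G) (e : x = y) (f : fiber x -> C) (b : fiber y)
  (pf : gr (proj1_sig b) = x) : ftr e f b = f (exist _ (proj1_sig b) pf).
Proof. by subst y; rewrite /ftr /=; congr f; apply: fib_eq. Qed.

End GR.

Unset Implicit Arguments. Set Strict Implicit.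

Lemma Kinv (R : realType) (G : groupoid) (K : gel G -> gel G -> R[i])
  (hK : forall g c : gel G, gr g = gr c ->
     K c g = K (gmul (ginv g) c) (geps (gr (gmul (ginv g) c))))
  (g a c : gel G) : gr a = gr g -> gr c = gs g ->
  K (gmul (ginv g) a) c = K a (gmul g c).
Proof.
move=> ha hc.
have hX : gr (gmul (ginv g) a) = gs g by rewrite gr_mul ?gr_inv // gs_inv.
rewrite (hK c (gmul (ginv g) a)); last by rewrite hX.
rewrite (hK (gmul g c) a); last by rewrite gr_mul.
rewrite inv_mul // -gmulA //; last by rewrite gs_inv.
by rewrite gr_inv gs_inv.
Qed.

Arguments Kinv {R G K} hK g a c.

Lemma ftrE' (G : groupoid) (C : Type) (x y : gob G) (e : x = y) (f : fiber x -> C) (b : fiber y) :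
  ftr e f b = f (exist _ (proj1_sig b) (etrans (proj2_sig b) (esym e))).
Proof. exact: ftrE. Qed.

Theorem mainTheorem3 (R : realType) (G : groupoid) (K : gel G -> gel G -> R[i])
  (H : forall x : gob G, (fiber x -> R[i]) -> Prop)
  (ip : forall x : gob G, (fiber x -> R[i]) -> (fiber x -> R[i]) -> R[i]) :
  pos_def_kernel K ->
  (forall g c : gel G, gr g <> gr c -> K g c = 0) ->
  (forall g c : gel G, gr g = gr c ->
     K c g = K (gmul (ginv g) c) (geps (gr (gmul (ginv g) c)))) ->
  (forall x : gob G, is_rkhs (Kres K x) (H x) (ip x)) ->
  exists U : forall g : gel G, (fiber (gs g) -> R[i]) -> (fiber (gr g) -> R[i]),
    [/\ (* U(g) is a unitary with U(g) K_chi = K_{g chi} *)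
        (forall g : gel G,
           unitary (H (gs g)) (ip (gs g)) (H (gr g)) (ip (gr g)) (U g) /\
           (forall c : fiber (gs g), U g (Kvec K c) = Kvec K (fmul c))),
        (* ... and it is the unique such unitary *)
        (forall (g : gel G) (V : (fiber (gs g) -> R[i]) -> (fiber (gr g) -> R[i])),
           unitary (H (gs g)) (ip (gs g)) (H (gr g)) (ip (gr g)) V ->
           (forall c : fiber (gs g), V (Kvec K c) = Kvec K (fmul c)) ->
           forall f, H (gs g) f -> V f = U g f),
        (* (U, {H(K^x)}) is a unitary representation:
           U(g1 g2) = U(g1) U(g2) whenever r g2 = s g1 *)
        (forall (g1 g2 : gel G) (h : gr g2 = gs g1) (f : fiber (gs g2) -> R[i]),
           H (gs g2) f ->
           U (gmul g1 g2) (ftr (gs_mul_sym h) f)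
           = ftr (gr_mul_sym h) (U g1 (ftr h (U g2 f)))) &
        (* K(chi, g) = < U(g) v(s g), U(chi) v(s chi) > with v(x) = K_{eps(x)} *)
        (forall (g c : gel G) (e : gr c = gr g),
           K c g = ip (gr g) (U g (Kvec K (feps (gs g))))
                             (ftr e (U c (Kvec K (feps (gs c))))))].
Proof.
move=> _ _ hK hrk.
pose U (g : gel G) (f : fiber (gs g) -> R[i]) : fiber (gr g) -> R[i] := fun a => f (phiG a).
have UK (g : gel G) (c : fiber (gs g)) : U g (Kvec K c) = Kvec K (fmul c).
  apply: funext => a; rewrite /U /Kvec /Kres /phiG /=.
  by apply: (Kinv hK); [exact: (proj2_sig a) | exact: (proj2_sig c)].
have key (g : gel G) : unitary (H (gs g)) (ip (gs g)) (H (gr g)) (ip (gr g)) (U g).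
  have Kfun : Kres K (gr g) = (fun b b' => Kres K (gs g) (phiG b) (phiG b')).
    apply: funext => b; apply: funext => b'; rewrite /Kres /phiG /=.
    rewrite (Kinv hK); first by rewrite mulK //; exact: (proj2_sig b').
      exact: (proj2_sig b).
    by rewrite gr_mul ?gr_inv // gs_inv; exact: (proj2_sig b').
  have rt := rkhs_transport (@phiG_psiG G g) (@psiG_phiG G g) (hrk (gs g)).
  rewrite -Kfun in rt.
  have cK (f : fiber (gs g) -> R[i]) : (fun b => f (phiG (fmul b))) = f.
    by apply: funext => b; rewrite phiG_psiG.
  have H'U f : H (gs g) f -> Ht (@fmul G g) (H (gs g)) (U g f).
    by move=> hf; rewrite /Ht /U cK.
  split.
  - by move=> f hf; have [] := approx rt (hrk (gr g)) (H'U f hf).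
  - by [].
  - move=> f f' hf hf'; rewrite -(ip_eq rt (hrk (gr g)) (H'U f hf) (H'U f' hf')).
    by rewrite /ipt /U !cK.
  - move=> h hh; have [h' _] := approx (hrk (gr g)) rt hh.
    exists (fun b => h (fmul b)) => //.
    by apply: funext => a; rewrite /U psiG_phiG.
exists U; split.
- by move=> g; split; [apply: key | apply: UK].
- move=> g V [V1 V2 V3 V4] VK f hf; apply: funext => a.
  have [_ hKr repr] := hrk (gr g); have [_ hKs reps] := hrk (gs g).
  rewrite (repr (V f) a (V1 f hf)).
  have -> : (fun b => Kres K (gr g) b a) = V (Kvec K (phiG a)).
    by rewrite VK psiG_phiG.
  rewrite V3 //; last exact: hKs.
  by rewrite /U (reps f (phiG a) hf).
- move=> g1 g2 h f hf; apply: funext => a.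
  rewrite /U (@ftrE' G _ _ _ (gs_mul_sym h) f) (@ftrE' G _ _ _ (gr_mul_sym h)) /= (@ftrE' G _ _ _ h).
  congr f; apply: fib_eq; rewrite /phiG /=.
  have ha : gr (proj1_sig a) = gr g1 by rewrite (proj2_sig a) gr_mul.
  rewrite inv_mul // -gmulA //; first by rewrite gr_inv gs_inv.
  by rewrite gs_inv ha.
- move=> g c e; rewrite !UK.
  have [_ hKr repr] := hrk (gr g).
  have -> : Kvec K (fmul (feps (gs g))) = Kvec K (exist (fun z => gr z = gr g) g (erefl (gr g))).
    by congr Kvec; apply: fib_eq; rewrite /= geps_mulr.
  have -> : ftr e (Kvec K (fmul (feps (gs c)))) =
      (fun b => Kres K (gr g) b (exist (fun z => gr z = gr g) c e)).
    by apply: funext => b; rewrite ftrE' /Kvec /Kres /= geps_mulr.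
  by rewrite -(repr _ _ (hKr _)).
Qed.
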